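(* Let $\{i_1,i_2\}=\{1,2\}$. (i) $[\mathfrak X^{(i_1)}_{i_1\otimes i_2},\mathfrak X^{(i_2)}_{i_1\otimes i_2}]\subset\mathfrak X^{(i_1)}_{i_1\otimes i_2}$. (ii) As vector spaces, $\mathfrak X=\mathfrak X^{(i_1)}_{i_1\otimes i_2}\oplus\mathfrak X^{(i_2)}_{i_1\otimes i_2}$ and $\mathcal U(\mathfrak X)=\mathcal U(\mathfrak X^{(i_1)}_{i_1\otimes i_2})\otimes\mathcal U(\mathfrak X^{(i_2)}_{i_1\otimes i_2})$ (via multiplication). In particular the set $\{W_1W_2\mid W_1\in\mathcal W(\mathfrak X^{(i_1)}_{i_1\otimes i_2}),\ W_2\in\mathcal W(\mathfrak X^{(i_2)}_{i_1\otimes i_2})\}$ is a basis of $\mathcal U(\mathfrak X)$.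
   Context: $\mathfrak X$ is the complex Lie algebra generated by $Z_1,Z_{11},Z_2,Z_{22},Z_{12}$ subject only to the relations $[Z_1,Z_2]=[Z_{11},Z_2]=[Z_1,Z_{22}]=0$ and $[Z_{11},Z_{22}]=-[Z_{11},Z_{12}]=[Z_{22},Z_{12}]=-[Z_1-Z_2,Z_{12}]$ (the infinitesimal pure braid Lie algebra of $\mathcal M_{0,5}$ in cubic coordinates); $\mathcal U(\cdot)$ denotes universal enveloping algebra. $\mathfrak X^{(1)}_{1\otimes2}$, $\mathfrak X^{(2)}_{1\otimes2}$, $\mathfrak X^{(2)}_{2\otimes1}$, $\mathfrak X^{(1)}_{2\otimes1}$ are the Lie subalgebras of $\mathfrak X$ generated by $\{Z_1,Z_{11},Z_{12}\}$, $\{Z_2,Z_{22}\}$, $\{Z_2,Z_{22},Z_{12}\}$, $\{Z_1,Z_{11}\}$ respectively; they are free Lie algebras on these generators. For such a subalgebra $\mathfrak A$, $\mathcal W(\mathfrak A)$ denotes the set of words (noncommutative monomials, including the empty word $\mathbf I$) in its generators, viewed in $\mathcal U(\mathfrak X)$. *)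

(* Defs.v *)
From mathcomp Require Import all_boot all_algebra.
From mathcomp Require Import Rstruct complex.
From mathcomp.multinomials Require Export monalg.
Import GRing.Theory.
Set Implicit Arguments.
Unset Strict Implicit.
Unset Printing Implicit Defensive.
Local Open Scope ring_scope.

Definition CC : fieldType := Rdefinitions.R[i].

Definition iZ1  : 'I_5 := inord 0.
Definition iZ11 : 'I_5 := inord 1.
Definition iZ2  : 'I_5 := inord 2.
Definition iZ22 : 'I_5 := inord 3.
Definition iZ12 : 'I_5 := inord 4.

(* Free associative C-algebra on the five generators (noncommutative
   polynomials): monoid algebra of the free monoid of words. *)
Definition FreeAlg := {malg CC[fmonom 'I_5]}.

Definition word (w : seq 'I_5) : FreeAlg := << FMonom w >>.
Definition Z (i : 'I_5) : FreeAlg := word [:: i].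

Definition br (x y : FreeAlg) : FreeAlg := x * y - y * x.

(* Defining relations of the Lie algebra X, written as relators r = 0:
   [Z1,Z2]=[Z11,Z2]=[Z1,Z22]=0 and
   [Z11,Z22] = -[Z11,Z12] = [Z22,Z12] = -[Z1-Z2,Z12]. *)
Definition relators : seq FreeAlg :=
  [:: br (Z iZ1) (Z iZ2);
      br (Z iZ11) (Z iZ2);
      br (Z iZ1) (Z iZ22);
      br (Z iZ11) (Z iZ22) - br (Z iZ22) (Z iZ12);
      br (Z iZ11) (Z iZ12) + br (Z iZ22) (Z iZ12);
      br (Z iZ22) (Z iZ12) + br (Z iZ1 - Z iZ2) (Z iZ12)].

(* Two-sided ideal of FreeAlg generated by the relators.
   U(X) = FreeAlg / relIdeal  (universal enveloping algebra of a
   finitely presented Lie algebra). *)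
Inductive relIdeal : FreeAlg -> Prop :=
  | relIdeal_gen (r a b : FreeAlg) : r \in relators -> relIdeal (a * r * b)
  | relIdeal_0 : relIdeal 0
  | relIdeal_add (x y : FreeAlg) : relIdeal x -> relIdeal y -> relIdeal (x + y)
  | relIdeal_scale (c : CC) (x : FreeAlg) : relIdeal x -> relIdeal (c *: x).

Definition eqU (x y : FreeAlg) : Prop := relIdeal (x - y).

Inductive lieGen (S : pred 'I_5) : FreeAlg -> Prop :=
  | lieGen_gen (i : 'I_5) : S i -> lieGen S (Z i)
  | lieGen_0 : lieGen S 0
  | lieGen_add (x y : FreeAlg) : lieGen S x -> lieGen S y -> lieGen S (x + y)
  | lieGen_scale (c : CC) (x : FreeAlg) : lieGen S x -> lieGen S (c *: x)
  | lieGen_br (x y : FreeAlg) : lieGen S x -> lieGen S y -> lieGen S (br x y).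

(* u (a representative of an element of U(X)) lies in the Lie subalgebra of
   X generated by {Z_i | i in S}, where X is identified with its (injective,
   by PBW) image in U(X), i.e. the Lie subalgebra of U(X) generated by all
   Z_i. *)
Definition inLie (S : pred 'I_5) (u : FreeAlg) : Prop :=
  exists x, lieGen S x /\ eqU u x.

Definition genSet (k i1 i2 : nat) : pred 'I_5 :=
  match k, i1, i2 with
  | 1, 1, 2 => fun i => i \in [:: iZ1; iZ11; iZ12]
  | 2, 1, 2 => fun i => i \in [:: iZ2; iZ22]
  | 2, 2, 1 => fun i => i \in [:: iZ2; iZ22; iZ12]
  | 1, 2, 1 => fun i => i \in [:: iZ1; iZ11]
  | _, _, _ => pred0
  end%N.

Definition isWord (S : pred 'I_5) (w : seq 'I_5) : bool := all S w.

(* Main.v *)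
Require Import Defs.
From mathcomp Require Import all_boot all_algebra.
From mathcomp Require Import Rstruct complex.
From mathcomp.multinomials Require Import monalg.
Import GRing.Theory.
Local Open Scope ring_scope.

Module Abs.
Set Implicit Arguments.
Unset Strict Implicit.
Unset Printing Implicit Defensive.
Ltac zmod_solve :=
  apply/eqP; rewrite -subr_eq0; apply/eqP;
  rewrite ?(opprD, opprB, opprK, oppr0, addr0, add0r);
  rewrite -[LHS]addr0 ?addrA -?addrA;
  repeat (match goal with
   | |- context [ - ?t ] => (repeat progress rewrite (addrCA _ t)); (repeat progress rewrite (addrCA _ (- t))); rewrite addKr
  end);
  rewrite ?addr0 ?add0r; try done.

Section AbsS.
Variable F : fieldType.
Variable A : lalgType F.
Variable I : eqType.
Variable W : seq I -> A.
Hypothesis W_cat : forall u v, W (u ++ v) = W u * W v.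
Hypothesis W_nil : W [::] = 1.
Hypothesis mono_ind : forall P : A -> Prop, P 0 -> (forall x y, P x -> P y -> P (x + y)) ->
  (forall c w, P (c *: W w)) -> forall x, P x.
Variable ext : (seq I -> A) -> A -> A.
Hypothesis extD : forall h, {morph ext h : x y / x + y}.
Hypothesis extZ : forall h c x, ext h (c *: x) = c *: ext h x.
Hypothesis extW : forall h w, ext h (W w) = h w.
Variable coef : seq I -> A -> F.
Hypothesis coefD : forall w, {morph coef w : x y / x + y}.
Hypothesis coefZ : forall w c x, coef w (c *: x) = c * coef w x.
Hypothesis coefW : forall w w', coef w (W w') = (w' == w)%:R.
Hypothesis scalerAr' : forall c (x y : A), y * (c *: x) = c *: (y * x).

Lemma ext0 h : ext h 0 = 0.
Proof. by have := extZ h 0 0; rewrite !scale0r. Qed.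
Lemma extN h x : ext h (- x) = - ext h x.
Proof. by rewrite -scaleN1r extZ scaleN1r. Qed.
Lemma extB h x y : ext h (x - y) = ext h x - ext h y.
Proof. by rewrite extD extN. Qed.
Lemma ext_sum (T : Type) h (s : seq T) (G : T -> A) :
  ext h (\sum_(t <- s) G t) = \sum_(t <- s) ext h (G t).
Proof.
elim: s => [|t s IH]; first by rewrite !big_nil ext0.
by rewrite !big_cons extD IH.
Qed.
Lemma coef0 w : coef w 0 = 0.
Proof. by have := coefZ w 0 0; rewrite scale0r mul0r. Qed.
Lemma coef_sum (T : Type) w (s : seq T) (G : T -> A) :
  coef w (\sum_(t <- s) G t) = \sum_(t <- s) coef w (G t).
Proof.
elim: s => [|t s IH]; first by rewrite !big_nil coef0.
by rewrite !big_cons coefD IH.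
Qed.

Definition Z i := W [:: i].
Lemma W_cons i w : W (i :: w) = Z i * W w.
Proof. by rewrite -W_cat. Qed.

Definition br (x y : A) : A := x * y - y * x.

Variables z1 z11 z2 z22 z12 : I.

Definition relsG : seq A :=
  [:: br (Z z1) (Z z2);
      br (Z z11) (Z z2);
      br (Z z1) (Z z22);
      br (Z z11) (Z z22) - br (Z z22) (Z z12);
      br (Z z11) (Z z12) + br (Z z22) (Z z12);
      br (Z z22) (Z z12) + br (Z z1 - Z z2) (Z z12)].

Inductive relI : A -> Prop :=
  | relI_gen (r a b : A) : r \in relsG -> relI (a * r * b)
  | relI_0 : relI 0
  | relI_add (x y : A) : relI x -> relI y -> relI (x + y)
  | relI_scale (c : F) (x : A) : relI x -> relI (c *: x).

Definition eqUG (x y : A) : Prop := relI (x - y).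

Inductive lieG (S : pred I) : A -> Prop :=
  | lieG_gen (i : I) : S i -> lieG S (Z i)
  | lieG_0 : lieG S 0
  | lieG_add (x y : A) : lieG S x -> lieG S y -> lieG S (x + y)
  | lieG_scale (c : F) (x : A) : lieG S x -> lieG S (c *: x)
  | lieG_br (x y : A) : lieG S x -> lieG S y -> lieG S (br x y).

Definition inLieG (S : pred I) (u : A) : Prop := exists x, lieG S x /\ eqUG u x.

Lemma idN x : relI x -> relI (- x).
Proof. by move=> H; rewrite -scaleN1r; apply: relI_scale. Qed.
Lemma idB x y : relI x -> relI y -> relI (x - y).
Proof. by move=> Hx Hy; apply: relI_add => //; apply: idN. Qed.
Lemma idE x y : x = y -> relI x -> relI y.
Proof. by move=> ->. Qed.
Lemma idMl y x : relI x -> relI (y * x).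
Proof.
elim=> [r a b Hr|||c z _ IH].
- by rewrite !mulrA; apply: relI_gen.
- by rewrite mulr0; apply: relI_0.
- by move=> ? ? _ ? _ ?; rewrite mulrDr; apply: relI_add.
- by rewrite scalerAr'; apply: relI_scale.
Qed.
Lemma idMr y x : relI x -> relI (x * y).
Proof.
elim=> [r a b Hr|||c z _ IH].
- by rewrite -!mulrA mulrA; apply: relI_gen.
- by rewrite mul0r; apply: relI_0.
- by move=> ? ? _ ? _ ?; rewrite mulrDl; apply: relI_add.
- by rewrite -scalerAl; apply: relI_scale.
Qed.
Lemma id_rel r : r \in relsG -> relI r.
Proof. by move=> H; have := relI_gen 1 1 H; rewrite mul1r mulr1. Qed.

Lemma eqU_refl x : eqUG x x.
Proof. by rewrite /eqUG subrr; apply: relI_0. Qed.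
Lemma eqU_sym x y : eqUG x y -> eqUG y x.
Proof. by rewrite /eqUG => H; rewrite -opprB; apply: idN. Qed.
Lemma eqU_trans x y z : eqUG x y -> eqUG y z -> eqUG x z.
Proof.
rewrite /eqUG => H1 H2; apply: (idE _ (relI_add H1 H2)).
by rewrite addrA subrK.
Qed.
Lemma eqU_add x1 x2 y1 y2 : eqUG x1 x2 -> eqUG y1 y2 -> eqUG (x1 + y1) (x2 + y2).
Proof.
rewrite /eqUG => H1 H2; apply: (idE _ (relI_add H1 H2)).
by rewrite opprD addrACA.
Qed.
Lemma eqU_scale c x y : eqUG x y -> eqUG (c *: x) (c *: y).
Proof. by rewrite /eqUG => H; rewrite -scalerBr; apply: relI_scale. Qed.
Lemma eqU_opp x y : eqUG x y -> eqUG (- x) (- y).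
Proof. by move=> H; rewrite -!scaleN1r; apply: eqU_scale. Qed.
Lemma eqU_mul x1 x2 y1 y2 : eqUG x1 x2 -> eqUG y1 y2 -> eqUG (x1 * y1) (x2 * y2).
Proof.
rewrite /eqUG => H1 H2.
apply: (idE _ (relI_add (idMr y1 H1) (idMl x2 H2))).
by rewrite mulrBl mulrBr addrA subrK.
Qed.
Lemma eqU_sub x1 x2 y1 y2 : eqUG x1 x2 -> eqUG y1 y2 -> eqUG (x1 - y1) (x2 - y2).
Proof. by move=> H1 H2; apply: eqU_add => //; apply: eqU_opp. Qed.
Lemma eqU_br x1 x2 y1 y2 : eqUG x1 x2 -> eqUG y1 y2 -> eqUG (br x1 y1) (br x2 y2).
Proof. by move=> H1 H2; apply: eqU_sub; apply: eqU_mul. Qed.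
Lemma eqU_eq x y : x = y -> eqUG x y.
Proof. by move=> ->; apply: eqU_refl. Qed.

Lemma br_anti x y : br y x = - br x y.
Proof. by rewrite /br opprB. Qed.
Lemma brDl x y z : br (x + y) z = br x z + br y z.
Proof. by rewrite /br mulrDl mulrDr opprD addrACA. Qed.
Lemma brDr x y z : br z (x + y) = br z x + br z y.
Proof. by rewrite /br mulrDl mulrDr opprD addrACA. Qed.
Lemma brZl c x y : br (c *: x) y = c *: br x y.
Proof. by rewrite /br -scalerAl scalerAr' scalerBr. Qed.
Lemma brZr c x y : br y (c *: x) = c *: br y x.
Proof. by rewrite /br -scalerAl scalerAr' scalerBr. Qed.
Lemma br0l x : br 0 x = 0.
Proof. by rewrite /br mul0r mulr0 subrr. Qed.
Lemma br0r x : br x 0 = 0.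
Proof. by rewrite /br mul0r mulr0 subrr. Qed.
Lemma brNl x y : br (- x) y = - br x y.
Proof. by rewrite -scaleN1r brZl scaleN1r. Qed.
Lemma brBl x y z : br (x - y) z = br x z - br y z.
Proof. by rewrite brDl brNl. Qed.

Lemma jacobi x y z : br (br x y) z = br x (br y z) - br y (br x z).
Proof. rewrite /br !mulrBl !mulrBr !mulrA; zmod_solve. Qed.

Lemma lieG_N S x : lieG S x -> lieG S (- x).
Proof. by move=> H; rewrite -scaleN1r; apply: lieG_scale. Qed.
Lemma lieG_B S x y : lieG S x -> lieG S y -> lieG S (x - y).
Proof. by move=> H1 H2; apply: lieG_add => //; apply: lieG_N. Qed.
Lemma lieG_mono (S T : pred I) x : (forall i, S i -> T i) -> lieG S x -> lieG T x.
Proof.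
move=> ST; elim=> [i Si|||c z _ IH|? ? _ ? _ ?].
- by apply: lieG_gen; apply: ST.
- exact: lieG_0.
- by move=> ? ? _ ? _ ?; apply: lieG_add.
- exact: lieG_scale.
- exact: lieG_br.
Qed.

Lemma inLie_eq S x y : eqUG x y -> inLieG S y -> inLieG S x.
Proof. by move=> H [z [Hz Hyz]]; exists z; split => //; apply: eqU_trans Hyz. Qed.
Lemma inLie_lie S x : lieG S x -> inLieG S x.
Proof. by move=> H; exists x; split => //; apply: eqU_refl. Qed.
Lemma inLie_0 S : inLieG S 0.
Proof. by apply: inLie_lie; apply: lieG_0. Qed.
Lemma inLie_add S x y : inLieG S x -> inLieG S y -> inLieG S (x + y).
Proof.
move=> [a [Ha Hxa]] [b [Hb Hyb]]; exists (a + b); split; first exact: lieG_add.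
exact: eqU_add.
Qed.
Lemma inLie_scale S c x : inLieG S x -> inLieG S (c *: x).
Proof.
move=> [a [Ha Hxa]]; exists (c *: a); split; first exact: lieG_scale.
exact: eqU_scale.
Qed.
Lemma inLie_N S x : inLieG S x -> inLieG S (- x).
Proof. by move=> H; rewrite -scaleN1r; apply: inLie_scale. Qed.
Lemma inLie_B S x y : inLieG S x -> inLieG S y -> inLieG S (x - y).
Proof. by move=> H1 H2; apply: inLie_add => //; apply: inLie_N. Qed.
Lemma inLie_br S x y : inLieG S x -> inLieG S y -> inLieG S (br x y).
Proof.
move=> [a [Ha Hxa]] [b [Hb Hyb]]; exists (br a b); split; first exact: lieG_br.
exact: eqU_br.
Qed.

Section Split.
Variable inA : pred I.
Variable delta : I -> I -> A.

Fixpoint spl (k : seq I) : seq I * seq I :=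
  if k is a :: k' then
    (if inA a then (a :: (spl k').1, (spl k').2) else ([::], k))
  else ([::], [::]).

Lemma spl_cat k : (spl k).1 ++ (spl k).2 = k.
Proof. by elim: k => [|a k IH] //=; case: (inA a) => //=; rewrite IH. Qed.
Lemma spl_all k : all inA (spl k).1.
Proof. by elim: k => [|a k IH] //=; case Ha: (inA a) => //=; rewrite Ha IH. Qed.
Lemma spl_sorted p q : all inA p -> all (predC inA) q -> spl (p ++ q) = (p, q).
Proof.
elim: p => [|a p IH] /=.
  by case: q => [|b q] //= _ /andP [Hb _]; rewrite (negbTE Hb).
by move=> /andP [Ha Hp] Hq; rewrite Ha IH.
Qed.

Fixpoint D (b : I) (w : seq I) : A :=
  if w is a :: w' then delta b a * W w' + Z a * D b w' else 0.

Definition actw i k : A :=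
  if inA i then W (i :: k)
  else D i (spl k).1 * W (spl k).2 + W ((spl k).1 ++ i :: (spl k).2).
Definition act i := ext (actw i).
Definition actseq (w : seq I) (v : A) := foldr act v w.
Definition Op (x v : A) := ext (fun w => actseq w v) x.
Definition N x := Op x 1.

Lemma actD i x y : act i (x + y) = act i x + act i y.
Proof. exact: extD. Qed.
Lemma actZ i c x : act i (c *: x) = c *: act i x.
Proof. exact: extZ. Qed.
Lemma act0 i : act i 0 = 0.
Proof. exact: ext0. Qed.
Lemma actW i w : act i (W w) = actw i w.
Proof. exact: extW. Qed.

Lemma actseqD w x y : actseq w (x + y) = actseq w x + actseq w y.
Proof. by elim: w => [|i w IH] //=; rewrite IH actD. Qed.
Lemma actseqZ w c x : actseq w (c *: x) = c *: actseq w x.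
Proof. by elim: w => [|i w IH] //=; rewrite IH actZ. Qed.
Lemma actseq0 w : actseq w 0 = 0.
Proof. by elim: w => [|i w IH] //=; rewrite IH act0. Qed.
Lemma actseq_cat u w v : actseq (u ++ w) v = actseq u (actseq w v).
Proof. by rewrite /actseq foldr_cat. Qed.

Lemma OpD x y v : Op (x + y) v = Op x v + Op y v.
Proof. exact: extD. Qed.
Lemma OpZ c x v : Op (c *: x) v = c *: Op x v.
Proof. exact: extZ. Qed.
Lemma OpW w v : Op (W w) v = actseq w v.
Proof. exact: extW. Qed.
Lemma Op0 v : Op 0 v = 0.
Proof. exact: ext0. Qed.
Lemma OpN x v : Op (- x) v = - Op x v.
Proof. exact: extN. Qed.
Lemma OpB x y v : Op (x - y) v = Op x v - Op y v.
Proof. exact: extB. Qed.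

Lemma OpvD x v1 v2 : Op x (v1 + v2) = Op x v1 + Op x v2.
Proof.
elim/mono_ind: x => [|x y Hx Hy|c w]; first by rewrite !Op0 addr0.
  by rewrite !OpD Hx Hy addrACA.
by rewrite !OpZ !OpW actseqD scalerDr.
Qed.
Lemma OpvZ x c v : Op x (c *: v) = c *: Op x v.
Proof.
elim/mono_ind: x => [|x y Hx Hy|d w]; first by rewrite !Op0 scaler0.
  by rewrite !OpD Hx Hy scalerDr.
by rewrite !OpZ !OpW actseqZ !scalerA mulrC.
Qed.
Lemma Opv0 x : Op x 0 = 0.
Proof. by have := OpvZ x 0 0; rewrite !scale0r. Qed.

Lemma OpM x y v : Op (x * y) v = Op x (Op y v).
Proof.
elim/mono_ind: x y => [|x1 x2 H1 H2|c u] y.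
- by rewrite mul0r !Op0.
- by rewrite mulrDl !OpD H1 H2.
rewrite -scalerAl !OpZ OpW; congr (_ *: _).
elim/mono_ind: y => [|y1 y2 H1 H2|d w].
- by rewrite mulr0 !Op0 actseq0.
- by rewrite mulrDr !OpD H1 H2 actseqD.
by rewrite scalerAr' !OpZ -W_cat !OpW actseqZ actseq_cat.
Qed.
Lemma Op1 v : Op 1 v = v.
Proof. by rewrite -W_nil OpW. Qed.
Lemma OpZg i v : Op (Z i) v = act i v.
Proof. by rewrite /Z OpW. Qed.
Lemma OpBr x y v : Op (br x y) v = Op x (Op y v) - Op y (Op x v).
Proof. by rewrite /br OpB !OpM. Qed.

Lemma act_A a v : inA a -> act a v = Z a * v.
Proof.
move=> Ha; elim/mono_ind: v => [|x y Hx Hy|c w].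
- by rewrite act0 mulr0.
- by rewrite actD Hx Hy mulrDr.
by rewrite actZ actW /actw Ha W_cons scalerAr'.
Qed.

Lemma comm_AB a b v : inA a -> ~~ inA b ->
  act b (act a v) - act a (act b v) = delta b a * v.
Proof.
move=> Ha Hb; elim/mono_ind: v => [|x y Hx Hy|c k].
- by rewrite !act0 subrr mulr0.
- by rewrite !actD opprD addrACA Hx Hy mulrDr.
rewrite !actZ -scalerBr scalerAr'; congr (_ *: _).
rewrite (act_A _ Ha) (act_A _ Ha) -W_cons !actW /actw (negbTE Hb) /= Ha /=.
rewrite -[in RHS](spl_cat k) W_cat.
rewrite !(W_cons, W_cat) !mulrDl !mulrDr !mulrA.
zmod_solve.
Qed.

Lemma Op_AA i j v : inA i -> inA j -> Op (br (Z i) (Z j)) v = br (Z i) (Z j) * v.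
Proof.
by move=> Hi Hj; rewrite OpBr !OpZg !act_A // /br mulrBl !mulrA.
Qed.
Lemma Op_BA a b v : inA a -> ~~ inA b -> Op (br (Z b) (Z a)) v = delta b a * v.
Proof. by move=> Ha Hb; rewrite OpBr !OpZg comm_AB. Qed.
Lemma Op_AB a b v : inA a -> ~~ inA b -> Op (br (Z a) (Z b)) v = - (delta b a * v).
Proof. by move=> Ha Hb; rewrite br_anti OpN Op_BA. Qed.

Section Hyp.
Hypothesis Hrel : forall r, r \in relsG -> forall v, Op r v = 0.
Hypothesis Hbase : forall a b, inA a -> ~~ inA b -> relI (br (Z b) (Z a) - delta b a).
Hypothesis Hdl : forall a b, inA a -> ~~ inA b -> lieG inA (delta b a).

Lemma N_ideal x : relI x -> N x = 0.
Proof.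
rewrite /N; elim=> [r a b Hr|||c y _ IH].
- by rewrite !OpM (Hrel Hr) Opv0.
- exact: Op0.
- by move=> ? ? _ H1 _ H2; rewrite OpD H1 H2 addr0.
- by rewrite OpZ IH scaler0.
Qed.

Lemma N_lin_add x y : N (x + y) = N x + N y.
Proof. exact: OpD. Qed.
Lemma N_lin_scale c x : N (c *: x) = c *: N x.
Proof. exact: OpZ. Qed.

Lemma actseq1 p q : all inA p -> all (predC inA) q -> actseq (p ++ q) 1 = W (p ++ q).
Proof.
elim: p => [|a p IH] /=.
  move=> _; elim: q => [|b q IHq] /=; first by rewrite W_nil.
  move=> /andP [Hb Hq]; rewrite IHq // actW /actw (negbTE Hb).
  by rewrite (@spl_sorted [::] q) //= mul0r add0r.
by move=> /andP [Ha Hp] Hq; rewrite IH // act_A // W_cons.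
Qed.

Lemma N_W_sorted p q : all inA p -> all (predC inA) q -> N (W (p ++ q)) = W (p ++ q).
Proof. by move=> Hp Hq; rewrite /N OpW actseq1. Qed.

Lemma D_spec b p : ~~ inA b -> all inA p -> relI (Z b * W p - D b p - W p * Z b).
Proof.
move=> Hb; elim: p => [|a p IH] /=.
  by move=> _; rewrite W_nil mulr1 mul1r subr0 subrr; apply: relI_0.
move=> /andP [Ha Hp].
apply: (idE _ (relI_add (idMr (W p) (Hbase Ha Hb)) (idMl (Z a) (IH Hp)))).
rewrite /br W_cons !(mulrBl, mulrBr, mulrDl, mulrDr) !mulrA.
zmod_solve.
Qed.

Lemma Zact_spec i y : relI (Z i * y - act i y).
Proof.
elim/mono_ind: y => [|x y Hx Hy|c k].
- by rewrite mulr0 act0 subrr; apply: relI_0.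
- apply: (idE _ (relI_add Hx Hy)).
  by rewrite mulrDr actD opprD addrACA.
rewrite scalerAr' actZ -scalerBr; apply: relI_scale.
rewrite actW /actw; case Hi: (inA i).
  by rewrite -W_cons subrr; apply: relI_0.
have := D_spec (negbT Hi) (spl_all k) => /(idMr (W (spl k).2)).
apply: idE.
have -> : W k = W (spl k).1 * W (spl k).2 by rewrite -W_cat spl_cat.
rewrite !(W_cat, W_cons) !(mulrBl, mulrBr, mulrDl, mulrDr) !mulrA.
zmod_solve.
Qed.

Lemma N_spec x : relI (x - N x).
Proof.
elim/mono_ind: x => [|x y Hx Hy|c w].
- by rewrite /N Op0 subrr; apply: relI_0.
- by apply: (idE _ (relI_add Hx Hy)); rewrite N_lin_add opprD addrACA.
rewrite N_lin_scale -scalerBr; apply: relI_scale.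
rewrite /N OpW; elim: w => [|i w IH] /=.
  by rewrite W_nil subrr; apply: relI_0.
apply: (idE _ (relI_add (idMl (Z i) IH) (Zact_spec i (actseq w 1)))).
rewrite W_cons mulrBr addrA subrK.
done.
Qed.

Definition spanP (P : pred (seq I)) (x : A) : Prop :=
  exists s : seq (F * seq I), all (fun t => P t.2) s /\ x = \sum_(t <- s) t.1 *: W t.2.

Lemma span0 (P : pred (seq I)) : spanP P 0.
Proof. by exists [::]; rewrite big_nil. Qed.
Lemma spanD (P : pred (seq I)) x y : spanP P x -> spanP P y -> spanP P (x + y).
Proof.
move=> [s1 [H1 ->]] [s2 [H2 ->]]; exists (s1 ++ s2).
by rewrite all_cat H1 H2 big_cat.
Qed.
Lemma spanZ (P : pred (seq I)) c x : spanP P x -> spanP P (c *: x).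
Proof.
move=> [s [H ->]]; exists [seq (c * t.1, t.2) | t <- s]; split.
  by rewrite all_map.
rewrite big_map scaler_sumr; apply: eq_bigr => t _ /=; by rewrite scalerA.
Qed.
Lemma spanB (P : pred (seq I)) x y : spanP P x -> spanP P y -> spanP P (x - y).
Proof. by move=> Hx Hy; apply: spanD => //; rewrite -scaleN1r; apply: spanZ. Qed.
Lemma spanW (P : pred (seq I)) c w : P w -> spanP P (c *: W w).
Proof. by move=> Hw; exists [:: (c, w)]; rewrite /= Hw big_seq1. Qed.
Lemma span_sum (P : pred (seq I)) (T : eqType) (s : seq T) (G : T -> A) :
  (forall t, t \in s -> spanP P (G t)) -> spanP P (\sum_(t <- s) G t).
Proof.
elim: s => [|t s IH] H; first by rewrite big_nil; apply: span0.
rewrite big_cons; apply: spanD; first by apply: H; rewrite inE eqxx.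
by apply: IH => u Hu; apply: H; rewrite inE Hu orbT.
Qed.
Lemma span_mono (P Q : pred (seq I)) x : (forall w, P w -> Q w) -> spanP P x -> spanP Q x.
Proof.
move=> PQ [s [H ->]]; exists s; split => //.
by apply/allP => t Ht; apply: PQ; exact: (allP H).
Qed.
Lemma spanM (P : pred (seq I)) x y : (forall u v, P u -> P v -> P (u ++ v)) ->
  spanP P x -> spanP P y -> spanP P (x * y).
Proof.
move=> HP [s1 [H1 ->]] [s2 [H2 ->]].
rewrite mulr_suml; apply: span_sum => t Ht.
rewrite mulr_sumr; apply: span_sum => u Hu.
rewrite -scalerAl scalerAr' scalerA -W_cat; apply: spanW.
by apply: HP; [exact: (allP H1) | exact: (allP H2)].
Qed.

Definition nP (S : pred I) : pred (seq I) := fun w => (w != [::]) && all S w.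

Lemma nP_cat S u v : nP S u -> nP S v -> nP S (u ++ v).
Proof. rewrite /nP /= all_cat; case: u => //= a u H1 /andP[_ H3]; by rewrite H1 H3. Qed.

Lemma lieG_span S x : lieG S x -> spanP (nP S) x.
Proof.
elim=> [i Si|||c y _ IH|y1 y2 _ IH1 _ IH2].
- by rewrite -[Z i]scale1r; apply: spanW; rewrite /nP /= Si.
- exact: span0.
- by move=> ? ? _ ? _ ?; apply: spanD.
- exact: spanZ.
- by rewrite /br; apply: spanB; apply: spanM => //; apply: nP_cat.
Qed.

Lemma ext_span_id (P : pred (seq I)) h x : (forall w, P w -> h w = W w) ->
  spanP P x -> ext h x = x.
Proof.
move=> Hh [s [Hs ->]]; rewrite ext_sum big_seq_cond [RHS]big_seq_cond.
apply: eq_bigr => t /andP [Ht _]; rewrite extZ extW Hh //; exact: (allP Hs).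
Qed.
Lemma ext_span_0 (P : pred (seq I)) h x : (forall w, P w -> h w = 0) ->
  spanP P x -> ext h x = 0.
Proof.
move=> Hh [s [Hs ->]]; rewrite ext_sum big_seq_cond big1 // => t /andP [Ht _].
by rewrite extZ extW Hh ?scaler0 //; exact: (allP Hs).
Qed.


Definition srt (t : seq I * seq I) := all inA t.1 && all (predC inA) t.2.

Definition SS (x : A) : Prop :=
  exists s : seq (F * (seq I * seq I)), all (fun t => srt t.2) s /\
    x = \sum_(t <- s) t.1 *: (W t.2.1 * W t.2.2).

Lemma SS0 : SS 0.
Proof. by exists [::]; rewrite big_nil. Qed.
Lemma SSD x y : SS x -> SS y -> SS (x + y).
Proof.
move=> [s1 [H1 ->]] [s2 [H2 ->]]; exists (s1 ++ s2).
by rewrite all_cat H1 H2 big_cat.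
Qed.
Lemma SSZ c x : SS x -> SS (c *: x).
Proof.
move=> [s [H ->]]; exists [seq (c * t.1, t.2) | t <- s]; split.
  by rewrite all_map.
rewrite big_map scaler_sumr; apply: eq_bigr => t _ /=; by rewrite scalerA.
Qed.
Lemma SS1 c p q : srt (p, q) -> SS (c *: (W p * W q)).
Proof. by move=> H; exists [:: (c, (p, q))]; rewrite /= H big_seq1. Qed.
Lemma SS_sum (T : eqType) (s : seq T) (G : T -> A) :
  (forall t, t \in s -> SS (G t)) -> SS (\sum_(t <- s) G t).
Proof.
elim: s => [|t s IH] H; first by rewrite big_nil; apply: SS0.
rewrite big_cons; apply: SSD; first by apply: H; rewrite inE eqxx.
by apply: IH => u Hu; apply: H; rewrite inE Hu orbT.
Qed.

Lemma SS_Dq d q : spanP (all inA) d -> all (predC inA) q -> SS (d * W q).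
Proof.
move=> [s [Hs ->]] Hq; rewrite mulr_suml; apply: SS_sum => t Ht.
rewrite -scalerAl; apply: SS1; rewrite /srt /= Hq andbT; exact: (allP Hs).
Qed.

Lemma D_span b p : ~~ inA b -> all inA p -> spanP (all inA) (D b p).
Proof.
move=> Hb; elim: p => [|a p IH] /=; first by move=> _; apply: span0.
move=> /andP [Ha Hp]; apply: spanD; apply: spanM.
- by move=> u v Hu Hv; rewrite all_cat Hu Hv.
- apply: (span_mono (P := nP inA)); first by move=> w /andP [].
  by apply: lieG_span; apply: Hdl.
- by rewrite -[W p]scale1r; apply: spanW.
- by move=> u v Hu Hv; rewrite all_cat Hu Hv.
- by rewrite -[Z a]scale1r; apply: spanW; rewrite /= Ha.
- exact: IH.
Qed.

Lemma act_SS i x : SS x -> SS (act i x).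
Proof.
move=> [s [Hs ->]]; rewrite /act ext_sum; apply: SS_sum => t Ht.
have := allP Hs t Ht; case: t Ht => c [p q] Ht /= /andP [Hp Hq].
rewrite extZ -W_cat extW; apply: SSZ; rewrite /actw.
case Hi: (inA i).
  by rewrite -[W _]scale1r -cat_cons W_cat; apply: SS1; rewrite /srt /= Hi Hp Hq.
rewrite spl_sorted //=; apply: SSD; first by apply: SS_Dq => //; apply: D_span => //; rewrite Hi.
by rewrite -[W _]scale1r W_cat; apply: SS1; rewrite /srt /= Hp Hi Hq.
Qed.

Lemma N_SS x : SS (N x).
Proof.
elim/mono_ind: x => [|x y Hx Hy|c w].
- by rewrite /N Op0; apply: SS0.
- by rewrite N_lin_add; apply: SSD.
rewrite N_lin_scale; apply: SSZ; rewrite /N OpW.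
elim: w => [|i w IH] /=; last exact: act_SS.
have -> : (1 : A) = 1 *: (W [::] * W [::]) by rewrite W_nil mulr1 scale1r.
by apply: SS1.
Qed.

Theorem C_span u : exists s : seq (F * (seq I * seq I)),
  all (fun t => all inA t.2.1 && all (predC inA) t.2.2) s /\
  eqUG u (\sum_(t <- s) t.1 *: (W t.2.1 * W t.2.2)).
Proof.
have [s [Hs E]] := N_SS u; exists s; split; first exact: Hs.
by rewrite -E; apply: N_spec.
Qed.

Lemma srt_inj p1 p2 q1 q2 : srt (p1, p2) -> srt (q1, q2) ->
  (p1 ++ p2 == q1 ++ q2) = ((p1, p2) == (q1, q2)).
Proof.
move=> /andP [H1 H2] /andP [H3 H4]; apply/eqP/eqP => [E|[-> ->]] //.
have := spl_sorted H1 H2; rewrite E spl_sorted //; by case=> -> ->.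
Qed.

Theorem C_indep (s : seq (seq I * seq I)) (c : seq I * seq I -> F) :
  uniq s -> all (fun p => all inA p.1 && all (predC inA) p.2) s ->
  eqUG (\sum_(p <- s) c p *: (W p.1 * W p.2)) 0 -> forall p, p \in s -> c p = 0.
Proof.
move=> Hu Hs; rewrite /eqUG subr0 => /N_ideal.
have -> : N (\sum_(p <- s) c p *: (W p.1 * W p.2)) = \sum_(p <- s) c p *: W (p.1 ++ p.2).
  rewrite /N /Op ext_sum big_seq_cond [RHS]big_seq_cond; apply: eq_bigr => p /andP [Hp _].
  have /andP [H1 H2] := allP Hs p Hp.
  by rewrite extZ -W_cat extW actseq1.
move=> E q Hq; move: (congr1 (coef (q.1 ++ q.2)) E); rewrite coef0 coef_sum.
rewrite (bigD1_seq q) //= coefZ coefW eqxx mulr1 big1_seq ?addr0 // => p /andP [Hpq Hp].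
rewrite coefZ coefW.
have Hp' := allP Hs p Hp; have Hq' := allP Hs q Hq.
move: (@srt_inj p.1 p.2 q.1 q.2 Hp' Hq'); rewrite -!surjective_pairing => ->.
by rewrite (negbTE Hpq) mulr0.
Qed.

Lemma N_nP_A x : spanP (nP inA) x -> N x = x.
Proof.
apply: ext_span_id => w /andP [_ Hw].
by rewrite -[w]cats0 actseq1.
Qed.
Lemma N_nP_B x : spanP (nP (predC inA)) x -> N x = x.
Proof.
apply: ext_span_id => w /andP [_ Hw].
by rewrite -[w]cat0s actseq1.
Qed.

Definition Pr := ext (fun w => if (w != [::]) && all inA w then W w else 0).

Theorem C_direct x : inLieG inA x -> inLieG (predC inA) x -> eqUG x 0.
Proof.
move=> [a [Ha Hxa]] [b [Hb Hxb]].
have Hab : relI (a - b) by apply: eqU_trans (eqU_sym Hxa) Hxb.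
have Sa := lieG_span Ha; have Sb := lieG_span Hb.
have Eab : a = b.
  apply/eqP; rewrite -subr_eq0; apply/eqP.
  have := N_ideal Hab; rewrite /N OpB -/(N a) -/(N b).
  by rewrite (N_nP_A Sa) (N_nP_B Sb).
have E1 : Pr a = a by apply: (ext_span_id _ Sa) => w Hw; rewrite /= (_ : (w != [::]) && all inA w = true).
have E2 : Pr b = 0.
  apply: (ext_span_0 _ Sb) => w /andP [Hw Hw'].
  case: w Hw Hw' => //= i w _ /andP [Hi _]; by rewrite (negbTE Hi).
by apply: (eqU_trans Hxa); apply: eqU_eq; rewrite -E1 Eab E2.
Qed.

Lemma jac2 x y1 y2 : br x (br y1 y2) = br (br x y1) y2 - br (br x y2) y1.
Proof. rewrite /br !(mulrBl, mulrBr) !mulrA; zmod_solve. Qed.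

Lemma ad_gen b a : ~~ inA b -> lieG inA a -> inLieG inA (br a (Z b)).
Proof.
move=> Hb; elim=> [a0 Ha0|||c y _ IH|y1 y2 Hy1 IH1 Hy2 IH2].
- apply: (@inLie_eq _ _ (- delta b a0)).
    by rewrite br_anti; apply: eqU_opp; apply: Hbase.
  by apply: inLie_N; apply: inLie_lie; apply: Hdl.
- by rewrite br0l; apply: inLie_0.
- by move=> ? ? _ H1 _ H2; rewrite brDl; apply: inLie_add.
- by rewrite brZl; apply: inLie_scale.
- rewrite jacobi; apply: inLie_B; apply: inLie_br => //; exact: inLie_lie.
Qed.

Theorem C_ideal x y : inLieG inA x -> inLieG (predC inA) y -> inLieG inA (br x y).
Proof.
move=> Hx [y' [Hy' Hyy']].
apply: (@inLie_eq _ _ (br x y')); first by apply: eqU_br => //; apply: eqU_refl.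
clear Hyy'; elim: Hy' x Hx => [b Hb||y1 y2 _ H1 _ H2|c z _ IH|y1 y2 _ IH1 _ IH2] x Hx.
- move: Hx => [a [Ha Hxa]]; apply: (@inLie_eq _ _ (br a (Z b))).
    by apply: eqU_br => //; apply: eqU_refl.
  exact: ad_gen.
- by rewrite br0r; apply: inLie_0.
- by rewrite brDr; apply: inLie_add; [apply: H1|apply: H2].
- by rewrite brZr; apply: inLie_scale; apply: IH.
- by rewrite jac2; apply: inLie_B; [apply: IH2; apply: IH1 | apply: IH1; apply: IH2].
Qed.

Theorem C_decomp x : inLieG predT x ->
  exists a b, inLieG inA a /\ inLieG (predC inA) b /\ eqUG x (a + b).
Proof.
move=> [x' [Hx' Hxx']].
suff [a [b [Ha [Hb E]]]] : exists a b, inLieG inA a /\ inLieG (predC inA) b /\ eqUG x' (a + b).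
  by exists a, b; split => //; split => //; apply: eqU_trans E.
clear Hxx'; elim: Hx' => [i _||y1 y2 _ [a1 [b1 [Ha1 [Hb1 E1]]]] _ [a2 [b2 [Ha2 [Hb2 E2]]]]|c z _ [a [b [Ha [Hb E]]]]|y1 y2 _ [a1 [b1 [Ha1 [Hb1 E1]]]] _ [a2 [b2 [Ha2 [Hb2 E2]]]]].
- case Hi: (inA i).
    exists (Z i), 0; split; first by apply: inLie_lie; apply: lieG_gen.
    by split; [apply: inLie_0 | rewrite addr0; apply: eqU_refl].
  exists 0, (Z i); split; first exact: inLie_0.
  by split; [apply: inLie_lie; apply: lieG_gen; rewrite /= Hi | rewrite add0r; apply: eqU_refl].
- by exists 0, 0; split; [apply: inLie_0 | split; [apply: inLie_0 | rewrite addr0; apply: eqU_refl]].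
- exists (a1 + a2), (b1 + b2); split; first exact: inLie_add.
  split; first exact: inLie_add.
  by rewrite addrACA; apply: eqU_add.
- exists (c *: a), (c *: b); split; first exact: inLie_scale.
  split; first exact: inLie_scale.
  by rewrite -scalerDr; apply: eqU_scale.
- exists (br a1 a2 + br a1 b2 - br a2 b1), (br b1 b2); split.
    apply: inLie_B; last exact: C_ideal.
    by apply: inLie_add; [apply: inLie_br | apply: C_ideal].
  split; first exact: inLie_br.
  apply: (eqU_trans (eqU_br E1 E2)); apply: eqU_eq.
  rewrite brDl !brDr (br_anti a2 b1); zmod_solve.
Qed.

End Hyp.
End Split.

Lemma inLie_mono (S T : pred I) x : (forall i, S i -> T i) -> inLieG S x -> inLieG T x.
Proof. by move=> ST [y [Hy E]]; exists y; split => //; apply: lieG_mono Hy. Qed.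

Theorem case_gen (inA B : pred I) delta :
  (forall i, predC inA i = B i) ->
  (forall r, r \in relsG -> forall v, Op inA delta r v = 0) ->
  (forall a b, inA a -> ~~ inA b -> relI (br (Z b) (Z a) - delta b a)) ->
  (forall a b, inA a -> ~~ inA b -> lieG inA (delta b a)) ->
  (forall x y, inLieG inA x -> inLieG B y -> inLieG inA (br x y)) /\
  ((forall x, inLieG predT x ->
      exists a b, inLieG inA a /\ inLieG B b /\ eqUG x (a + b)) /\
   (forall x, inLieG inA x -> inLieG B x -> eqUG x 0)) /\
  (forall u : A, exists s : seq (F * (seq I * seq I)),
      all (fun t => all inA t.2.1 && all B t.2.2) s /\
      eqUG u (\sum_(t <- s) t.1 *: (W t.2.1 * W t.2.2))) /\
  (forall (s : seq (seq I * seq I)) (c : seq I * seq I -> F),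
      uniq s -> all (fun p => all inA p.1 && all B p.2) s ->
      eqUG (\sum_(p <- s) c p *: (W p.1 * W p.2)) 0 -> forall p, p \in s -> c p = 0).
Proof.
move=> HB Hrel Hbase Hdl.
have toC x : inLieG B x -> inLieG (predC inA) x.
  by apply: inLie_mono => i; rewrite HB.
have toB x : inLieG (predC inA) x -> inLieG B x.
  by apply: inLie_mono => i; rewrite HB.
have allB w : all B w = all (predC inA) w by apply: eq_all => i; rewrite HB.
split; first by move=> x y Hx Hy; exact: (C_ideal Hbase Hdl Hx (toC _ Hy)).
split; first split.
- move=> x Hx; have [a [b [Ha [Hb E]]]] := C_decomp Hbase Hdl Hx.
  by exists a, b; split => //; split => //; apply: toB.
- by move=> x Hx Hy; apply: (C_direct Hrel) => //; apply: toC.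
split.
- move=> u; have [s [Hs E]] := C_span Hbase Hdl u; exists s; split => //.
  by apply: sub_all Hs => t /andP [-> /=]; rewrite allB.
- move=> s c Hu Hs; apply: (C_indep Hrel) => //.
  by apply: sub_all Hs => p /andP [-> /=]; rewrite allB.
Qed.

Section Dist.
Hypothesis Hdist : uniq [:: z1; z11; z2; z22; z12].
Hypothesis Hcov : forall i, i \in [:: z1; z11; z2; z22; z12].

Lemma dist_facts :
  [/\ [&& z1 != z11, z1 != z2, z1 != z22 & z1 != z12],
      [&& z11 != z1, z11 != z2, z11 != z22 & z11 != z12],
      [&& z2 != z1, z2 != z11, z2 != z22 & z2 != z12],
      [&& z22 != z1, z22 != z11, z22 != z2 & z22 != z12] &
      [&& z12 != z1, z12 != z11, z12 != z2 & z12 != z22]].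
Proof.
move: Hdist; rewrite /= !inE !negb_or.
move=> /andP [/and4P [a1 a2 a3 a4] /andP [/and3P [b1 b2 b3] /andP [/andP [c1 c2] /andP [d1 _]]]].
by rewrite !(eq_sym z11) !(eq_sym z2) !(eq_sym z22) !(eq_sym z12) ?a1 ?a2 ?a3 ?a4 ?b1 ?b2 ?b3 ?c1 ?c2 ?d1.
Qed.

Ltac dist := have [/and4P [/negbTE a1 /negbTE a2 /negbTE a3 /negbTE a4]
  /and4P [/negbTE b1 /negbTE b2 /negbTE b3 /negbTE b4]
  /and4P [/negbTE c1 /negbTE c2 /negbTE c3 /negbTE c4]
  /and4P [/negbTE d1 /negbTE d2 /negbTE d3 /negbTE d4]
  /and4P [/negbTE e1 /negbTE e2 /negbTE e3 /negbTE e4]] := dist_facts.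
Ltac dsimp := rewrite ?eqxx; repeat match goal with H : (_ == _) = false |- _ => rewrite H end; rewrite ?eqxx /=.
Ltac cov i := have := Hcov i; rewrite !inE;
  move=> /orP [/eqP->|/orP [/eqP->|/orP [/eqP->|/orP [/eqP->|/eqP->]]]].

Definition inA1 : pred I := fun i => i \in [:: z1; z11; z12].
Definition B1 : pred I := fun i => i \in [:: z2; z22].

Lemma B1E i : predC inA1 i = B1 i.
Proof.
dist; rewrite /inA1 /B1 /= !inE; cov i; by dsimp.
Qed.

Definition delta1 (b a : I) : A :=
  if (b == z2) && (a == z12) then br (Z z1) (Z z12) - br (Z z11) (Z z12)
  else if (b == z22) && (a == z11) then br (Z z11) (Z z12)
  else if (b == z22) && (a == z12) then - br (Z z11) (Z z12)
  else 0.

Lemma R1 : relI (br (Z z1) (Z z2)). Proof. by apply: id_rel; rewrite /relsG !inE eqxx. Qed.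
Lemma R2 : relI (br (Z z11) (Z z2)). Proof. by apply: id_rel; rewrite /relsG !inE eqxx ?orbT. Qed.
Lemma R3 : relI (br (Z z1) (Z z22)). Proof. by apply: id_rel; rewrite /relsG !inE eqxx ?orbT. Qed.
Lemma R4 : relI (br (Z z11) (Z z22) - br (Z z22) (Z z12)).
Proof. by apply: id_rel; rewrite /relsG !inE eqxx ?orbT. Qed.
Lemma R5 : relI (br (Z z11) (Z z12) + br (Z z22) (Z z12)).
Proof. by apply: id_rel; rewrite /relsG !inE eqxx ?orbT. Qed.
Lemma R6 : relI (br (Z z22) (Z z12) + br (Z z1 - Z z2) (Z z12)).
Proof. by apply: id_rel; rewrite /relsG !inE eqxx ?orbT. Qed.

Lemma rels_case (P : A -> Prop) :
  P (br (Z z1) (Z z2)) -> P (br (Z z11) (Z z2)) -> P (br (Z z1) (Z z22)) ->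
  P (br (Z z11) (Z z22) - br (Z z22) (Z z12)) ->
  P (br (Z z11) (Z z12) + br (Z z22) (Z z12)) ->
  P (br (Z z22) (Z z12) + br (Z z1 - Z z2) (Z z12)) ->
  forall r, r \in relsG -> P r.
Proof.
move=> H1 H2 H3 H4 H5 H6 r; rewrite /relsG !inE.
by move=> /orP [/eqP->|/orP [/eqP->|/orP [/eqP->|/orP [/eqP->|/orP [/eqP->|/eqP->]]]]].
Qed.

Lemma hA1 : [/\ inA1 z1, inA1 z11, inA1 z12, ~~ inA1 z2 & ~~ inA1 z22].
Proof. by dist; rewrite /inA1 !inE; dsimp. Qed.

Lemma Hdl1 a b : inA1 a -> ~~ inA1 b -> lieG inA1 (delta1 b a).
Proof.
have [h1 h11 h12 _ _] := hA1.
move=> _ _; rewrite /delta1.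
case: ifP => _; first by apply: lieG_B; apply: lieG_br; apply: lieG_gen.
case: ifP => _; first by apply: lieG_br; apply: lieG_gen.
case: ifP => _; first by apply: lieG_N; apply: lieG_br; apply: lieG_gen.
exact: lieG_0.
Qed.

Lemma Hbase1 a b : inA1 a -> ~~ inA1 b -> relI (br (Z b) (Z a) - delta1 b a).
Proof.
move=> Ha Hb; have := Hb; rewrite -[~~ inA1 b]/(predC inA1 b) B1E /B1 !inE.
move: Ha; rewrite /inA1 !inE; dist.
move=> /orP [/eqP->|/orP [/eqP->|/eqP->]] /orP [/eqP->|/eqP->]; rewrite /delta1; dsimp.
- apply: (idE _ (idN R1)); rewrite (br_anti (Z z1) (Z z2)); zmod_solve.
- apply: (idE _ (idN R3)); rewrite (br_anti (Z z1) (Z z22)); zmod_solve.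
- apply: (idE _ (idN R2)); rewrite (br_anti (Z z11) (Z z2)); zmod_solve.
- apply: (idE _ (idN (relI_add R4 R5))); rewrite (br_anti (Z z11) (Z z22)); zmod_solve.
- apply: (idE _ (idB R5 R6)); rewrite brBl; zmod_solve.
- apply: (idE _ R5); zmod_solve.
Qed.

Lemma Hrel1 r : r \in relsG -> forall v, Op inA1 delta1 r v = 0.
Proof.
have [h1 h11 h12 h2 h22] := hA1.
dist; move: r; apply: (rels_case (P := fun r => forall v, Op inA1 delta1 r v = 0)) => v.
- by rewrite (Op_AB _ _ h1 h2) /delta1; dsimp; rewrite mul0r oppr0.
- by rewrite (Op_AB _ _ h11 h2) /delta1; dsimp; rewrite mul0r oppr0.
- by rewrite (Op_AB _ _ h1 h22) /delta1; dsimp; rewrite mul0r oppr0.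
- have E1 := Op_AB delta1 v h11 h22; have E2 := Op_BA delta1 v h12 h22.
  rewrite OpB E1 E2 /delta1; dsimp.
  rewrite /br !(mulNr, mulrBl, mulrDl) ?mulrA; zmod_solve.
- have E1 := Op_AA delta1 v h11 h12; have E2 := Op_BA delta1 v h12 h22.
  rewrite OpD E1 E2 /delta1; dsimp.
  rewrite /br !(mulNr, mulrBl, mulrDl) ?mulrA; zmod_solve.
- have E1 := Op_BA delta1 v h12 h22; have E2 := Op_AA delta1 v h1 h12.
  have E3 := Op_BA delta1 v h12 h2.
  rewrite brBl OpD E1 OpB E2 E3 /delta1; dsimp.
  rewrite /br !(mulNr, mulrBl, mulrDl) ?mulrA; zmod_solve.
Qed.

Definition case1 := case_gen B1E Hrel1 Hbase1 Hdl1.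

Definition inA2 : pred I := fun i => i \in [:: z2; z22; z12].
Definition B2 : pred I := fun i => i \in [:: z1; z11].

Lemma B2E i : predC inA2 i = B2 i.
Proof. dist; rewrite /inA2 /B2 /= !inE; cov i; by dsimp. Qed.

Definition delta2 (b a : I) : A :=
  if (b == z1) && (a == z12) then br (Z z2) (Z z12) - br (Z z22) (Z z12)
  else if (b == z11) && (a == z22) then br (Z z22) (Z z12)
  else if (b == z11) && (a == z12) then - br (Z z22) (Z z12)
  else 0.

Lemma hA2 : [/\ inA2 z2, inA2 z22, inA2 z12, ~~ inA2 z1 & ~~ inA2 z11].
Proof. by dist; rewrite /inA2 !inE; dsimp. Qed.

Lemma Hdl2 a b : inA2 a -> ~~ inA2 b -> lieG inA2 (delta2 b a).
Proof.
have [h2 h22 h12 _ _] := hA2.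
move=> _ _; rewrite /delta2.
case: ifP => _; first by apply: lieG_B; apply: lieG_br; apply: lieG_gen.
case: ifP => _; first by apply: lieG_br; apply: lieG_gen.
case: ifP => _; first by apply: lieG_N; apply: lieG_br; apply: lieG_gen.
exact: lieG_0.
Qed.

Lemma Hbase2 a b : inA2 a -> ~~ inA2 b -> relI (br (Z b) (Z a) - delta2 b a).
Proof.
move=> Ha Hb; have := Hb; rewrite -[~~ inA2 b]/(predC inA2 b) B2E /B2 !inE.
move: Ha; rewrite /inA2 !inE; dist.
move=> /orP [/eqP->|/orP [/eqP->|/eqP->]] /orP [/eqP->|/eqP->]; rewrite /delta2; dsimp.
- apply: (idE _ R1); zmod_solve.
- apply: (idE _ R2); zmod_solve.
- apply: (idE _ R3); zmod_solve.
- apply: (idE _ R4); zmod_solve.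
- apply: (idE _ R6); rewrite brBl; zmod_solve.
- apply: (idE _ R5); zmod_solve.
Qed.

Lemma Hrel2 r : r \in relsG -> forall v, Op inA2 delta2 r v = 0.
Proof.
have [h2 h22 h12 h1 h11] := hA2.
dist; move: r; apply: (rels_case (P := fun r => forall v, Op inA2 delta2 r v = 0)) => v.
- by rewrite (Op_BA _ _ h2 h1) /delta2; dsimp; rewrite mul0r.
- by rewrite (Op_BA _ _ h2 h11) /delta2; dsimp; rewrite mul0r.
- by rewrite (Op_BA _ _ h22 h1) /delta2; dsimp; rewrite mul0r.
- have E1 := Op_BA delta2 v h22 h11; have E2 := Op_AA delta2 v h22 h12.
  rewrite OpB E1 E2 /delta2; dsimp.
  rewrite /br !(mulNr, mulrBl, mulrDl) ?mulrA; zmod_solve.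
- have E1 := Op_BA delta2 v h12 h11; have E2 := Op_AA delta2 v h22 h12.
  rewrite OpD E1 E2 /delta2; dsimp.
  rewrite /br !(mulNr, mulrBl, mulrDl) ?mulrA; zmod_solve.
- have E1 := Op_AA delta2 v h22 h12; have E2 := Op_BA delta2 v h12 h1.
  have E3 := Op_AA delta2 v h2 h12.
  rewrite brBl OpD E1 OpB E2 E3 /delta2; dsimp.
  rewrite /br !(mulNr, mulrBl, mulrDl) ?mulrA; zmod_solve.
Qed.

Definition case2 := case_gen B2E Hrel2 Hbase2 Hdl2.

End Dist.

End AbsS.

Section Gen.
Variable K : comNzRingType.
Variable V : lalgType K.
Variable B : Type.
Variable m : K -> B -> V.
Variable mm : B -> B -> B.
Hypothesis ind : forall P : V -> Prop, P 0 -> (forall x y, P x -> P y -> P (x + y)) ->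
  (forall c b, P (m c b)) -> forall x, P x.
Hypothesis mZ : forall c d b, c *: m d b = m (c * d) b.
Hypothesis mM : forall c d b b', m c b * m d b' = m (c * d) (mm b b').

Lemma gen_scal (U : lmodType K) (f : V -> U) (g : B -> U) :
  (forall x y, f (x + y) = f x + f y) -> f 0 = 0 ->
  (forall c b, f (m c b) = c *: g b) -> forall c x, f (c *: x) = c *: f x.
Proof.
move=> fD f0 fm c; elim/ind => [|x y Hx Hy|d b].
- by rewrite scaler0 f0 scaler0.
- by rewrite scalerDr !fD Hx Hy scalerDr.
- by rewrite mZ !fm scalerA.
Qed.

Lemma gen_scalerAr c (x y : V) : y * (c *: x) = c *: (y * x).
Proof.
elim/ind: y => [|y1 y2 H1 H2|d u]; first by rewrite !mul0r scaler0.
  by rewrite !mulrDl H1 H2 scalerDr.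
elim/ind: x => [|x1 x2 H1 H2|e v]; first by rewrite scaler0 !mulr0 scaler0.
  by rewrite scalerDr !mulrDr H1 H2 scalerDr.
by rewrite mZ !mM mZ mulrCA.
Qed.
End Gen.

End Abs.

Module Conc.
Import Abs.

Definition FA : lalgType CC := FreeAlg.

Definition extC (h : seq 'I_5 -> FA) (x : FA) : FA :=
  mmap (@mkmalgU (fmonom (ordinal 5)) CC (@mone _) : CC -> FreeAlg)
    (fun k : fmonom 'I_5 => h (fmonom_val k)) x.

Lemma extCD h : {morph extC h : x y / x + y}.
Proof. move=> x y; exact: mmapD. Qed.
Lemma extC0 h : extC h 0 = 0.
Proof. exact: mmap0. Qed.
Lemma extCU h c k : extC h << c *g k >> = c *: h (fmonom_val k).
Proof. by rewrite /extC mmapU mul_malgC. Qed.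

Definition mC (c : CC) (k : fmonom 'I_5) : FA := << c *g k >>.

Lemma malg_ind (P : FA -> Prop) : P 0 -> (forall x y, P x -> P y -> P (x + y)) ->
  (forall c (k : fmonom 'I_5), P (mC c k)) -> forall x, P x.
Proof.
move=> P0 PD PU x; rewrite (monalgE x).
apply: big_ind => // k _; exact: (PU _ k).
Qed.

Lemma malgP' (g1 g2 : FreeAlg) : (forall k : fmonom 'I_5, g1@_k = g2@_k) -> g1 = g2.
Proof. by move=> H; apply/malgP. Qed.

Lemma scaleU (c d : CC) (k : fmonom 'I_5) : c *: mC d k = mC (c * d) k.
Proof.
apply: malgP' => k'; rewrite mcoeffZ (mcoeffU k d k') (mcoeffU k (c * d) k').
by rewrite mulrnAr.
Qed.

Lemma mulU (c d : CC) (k l : fmonom 'I_5) : mC c k * mC d l = mC (c * d) (mmul k l).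
Proof. by rewrite /mC malgM_def fgmulUU. Qed.

Lemma W_cat u v : (word (u ++ v) : FA) = word u * word v.
Proof.
have E : mmul (FMonom u) (FMonom v) = FMonom (u ++ v) :> fmonom 'I_5.
  by apply: val_inj => /=; rewrite fmM.
change (mC 1 (FMonom (u ++ v)) = mC 1 (FMonom u) * mC 1 (FMonom v)).
by rewrite mulU (mulr1 (1 : CC)) E.
Qed.

Lemma W_nil : (word [::] : FA) = 1.
Proof.
have -> : (1 : FA) = mC 1 (@mone (fmonom 'I_5)) by [].
change (mC 1 (FMonom [::]) = mC 1 (@mone (fmonom 'I_5))).
congr (mC 1 _); apply: val_inj => /=; by rewrite fm1.
Qed.

Lemma mono_ind (P : FA -> Prop) : P 0 -> (forall x y, P x -> P y -> P (x + y)) ->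
  (forall c w, P (c *: word w)) -> forall x, P x.
Proof.
move=> P0 PD PW; apply: malg_ind => // c k.
have E : mC c k = c *: word (fmonom_val k).
  change (mC c k = c *: mC 1 (FMonom (fmonom_val k))).
  by rewrite fmK scaleU (mulr1 c).
rewrite E; exact: PW.
Qed.

Lemma extCZ h c x : extC h (c *: x) = c *: extC h x.
Proof.
exact: (@gen_scal _ FA _ mC malg_ind scaleU _ (extC h) (fun k => h (fmonom_val k)) (extCD h) (extC0 h) (extCU h)).
Qed.

Lemma extCW h w : extC h (word w) = h w.
Proof. by rewrite extCU scale1r. Qed.

Lemma scalerAr' c (x y : FA) : y * (c *: x) = c *: (y * x).
Proof. exact: (@gen_scalerAr _ FA _ mC mmul malg_ind scaleU mulU). Qed.

Definition coefC (w : seq 'I_5) (x : FA) : CC := x@_(FMonom w).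
Lemma coefCD w : {morph coefC w : x y / x + y}.
Proof. move=> x y; exact: mcoeffD. Qed.
Lemma coefCZ w c x : coefC w (c *: x) = c * coefC w x.
Proof. exact: mcoeffZ. Qed.
Lemma coefCW w w' : coefC w (word w') = (w' == w)%:R.
Proof. by rewrite /coefC /word mcoeffU1 fmP. Qed.

Lemma Hdist : uniq [:: iZ1; iZ11; iZ2; iZ22; iZ12].
Proof. rewrite /= !inE /iZ1 /iZ11 /iZ2 /iZ22 /iZ12 -!val_eqE /= !inordK //. Qed.
Lemma Hcov i : i \in [:: iZ1; iZ11; iZ2; iZ22; iZ12].
Proof.
rewrite !inE /iZ1 /iZ11 /iZ2 /iZ22 /iZ12 -!val_eqE /= !inordK //.
by case: i => [[|[|[|[|[|n]]]]] Hi].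
Qed.

Notation relIC := (@relI CC FA 'I_5 word iZ1 iZ11 iZ2 iZ22 iZ12).
Notation lieGC := (@lieG CC FA 'I_5 word).
Notation eqUC := (@eqUG CC FA 'I_5 word iZ1 iZ11 iZ2 iZ22 iZ12).
Notation inLieC := (@inLieG CC FA 'I_5 word iZ1 iZ11 iZ2 iZ22 iZ12).

Lemma relI_to x : relIC x -> relIdeal x.
Proof.
elim=> [r a b Hr|||c y _ IH].
- exact: relIdeal_gen Hr.
- exact: relIdeal_0.
- move=> ? ? _ H1 _ H2; exact: relIdeal_add H1 H2.
- exact: relIdeal_scale IH.
Qed.
Lemma relI_of x : relIdeal x -> relIC x.
Proof.
elim=> [r a b Hr|||c y _ IH].
- exact: relI_gen Hr.
- exact: relI_0.
- move=> ? ? _ H1 _ H2; exact: relI_add H1 H2.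
- exact: relI_scale IH.
Qed.
Lemma lieG_to S x : lieGC S x -> lieGen S x.
Proof.
elim=> [i Hi||x1 x2 _ H1 _ H2|c y _ IH|x1 x2 _ H1 _ H2].
- exact: lieGen_gen Hi.
- exact: lieGen_0.
- exact: lieGen_add H1 H2.
- exact: lieGen_scale IH.
- exact: lieGen_br H1 H2.
Qed.
Lemma lieG_of S x : lieGen S x -> lieGC S x.
Proof.
elim=> [i Hi||x1 x2 _ H1 _ H2|c y _ IH|x1 x2 _ H1 _ H2].
- exact: lieG_gen Hi.
- exact: lieG_0.
- exact: lieG_add H1 H2.
- exact: lieG_scale IH.
- exact: lieG_br H1 H2.
Qed.
Lemma eqU_to x y : eqUC x y -> eqU x y.
Proof. exact: relI_to. Qed.
Lemma eqU_of x y : eqU x y -> eqUC x y.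
Proof. exact: relI_of. Qed.
Lemma inLie_to S x : inLieC S x -> inLie S x.
Proof. by case=> y [H1 H2]; exists y; split; [exact: lieG_to | exact: eqU_to]. Qed.
Lemma inLie_of S x : inLie S x -> inLieC S x.
Proof. by case=> y [H1 H2]; exists y; split; [exact: lieG_of | exact: eqU_of]. Qed.

Definition C1 := @case1 CC FA 'I_5 word W_cat W_nil mono_ind extC extCD extCZ extCW
  coefC coefCD coefCZ coefCW scalerAr' iZ1 iZ11 iZ2 iZ22 iZ12 Hdist Hcov.
Definition C2 := @case2 CC FA 'I_5 word W_cat W_nil mono_ind extC extCD extCZ extCW
  coefC coefCD coefCZ coefCW scalerAr' iZ1 iZ11 iZ2 iZ22 iZ12 Hdist Hcov.

End Conc.

Unset Implicit Arguments.
Set Strict Implicit.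

Theorem proposition4p1 (i1 i2 : nat) :
  ((i1 == 1%N) && (i2 == 2%N)) || ((i1 == 2%N) && (i2 == 1%N)) ->
  let A := genSet i1 i1 i2 in
  let B := genSet i2 i1 i2 in
  (forall x y, inLie A x -> inLie B y -> inLie A (br x y)) /\
  ((forall x, inLie predT x ->
      exists a b, inLie A a /\ inLie B b /\ eqU x (a + b)) /\
   (forall x, inLie A x -> inLie B x -> eqU x 0)) /\
  (forall u : FreeAlg,
      exists s : seq (CC * (seq 'I_5 * seq 'I_5)),
        all (fun t => isWord A t.2.1 && isWord B t.2.2) s /\
        eqU u (\sum_(t <- s) t.1 *: (word t.2.1 * word t.2.2))) /\
  (forall (s : seq (seq 'I_5 * seq 'I_5)) (c : seq 'I_5 * seq 'I_5 -> CC),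
      uniq s ->
      all (fun p => isWord A p.1 && isWord B p.2) s ->
      eqU (\sum_(p <- s) c p *: (word p.1 * word p.2)) 0 ->
      forall p, p \in s -> c p = 0).
Proof.
case/orP => /andP [/eqP -> /eqP ->]; cbv zeta.
- have [P1 [[P2 P3] [P4 P5]]] := Conc.C1.
  split; [|split; [split|split]].
  + move=> x y Hx Hy; apply: Conc.inLie_to; apply: P1; exact: Conc.inLie_of.
  + move=> x Hx; have [a [b [Ha [Hb E]]]] := P2 x (@Conc.inLie_of _ _ Hx).
    exists a, b; split; [exact: Conc.inLie_to|split; [exact: Conc.inLie_to|exact: Conc.eqU_to]].
  + move=> x Hx Hy; apply: Conc.eqU_to; apply: P3; exact: Conc.inLie_of.
  + move=> u; have [s [Hs E]] := P4 u; exists s; split; [exact: Hs|exact: Conc.eqU_to].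
  + move=> s c Hu Hs E; apply: (P5 s c Hu Hs); exact: Conc.eqU_of.
- have [P1 [[P2 P3] [P4 P5]]] := Conc.C2.
  split; [|split; [split|split]].
  + move=> x y Hx Hy; apply: Conc.inLie_to; apply: P1; exact: Conc.inLie_of.
  + move=> x Hx; have [a [b [Ha [Hb E]]]] := P2 x (@Conc.inLie_of _ _ Hx).
    exists a, b; split; [exact: Conc.inLie_to|split; [exact: Conc.inLie_to|exact: Conc.eqU_to]].
  + move=> x Hx Hy; apply: Conc.eqU_to; apply: P3; exact: Conc.inLie_of.
  + move=> u; have [s [Hs E]] := P4 u; exists s; split; [exact: Hs|exact: Conc.eqU_to].
  + move=> s c Hu Hs E; apply: (P5 s c Hu Hs); exact: Conc.eqU_of.
Qed.
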